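(* Let $D=\{(x,y)\in\mathbb R^2:x^2+y^2\le1\}$ with the Euclidean metric. There is a sequence of $C^1$ diffeomorphisms $f_n\colon D\to D$ that does not converge to $\mathrm{id}_D$ in the $C^1$ topology but satisfies $\mathrm{d}_W(f_n,\mathrm{id}_D)\to0$ as $n\to\infty$.
   Context: $\mathrm{d}_{C^0}(f,g)=\max_{p}\|f(p)-g(p)\|+\max_p\|f^{-1}(p)-g^{-1}(p)\|$; $\mathrm{d}'_W(f,g)=\sup_{p\ne q}\frac{|\|f(p)-f(q)\|-\|g(p)-g(q)\||}{\|p-q\|}$; $\mathrm{d}_W(f,g)=\mathrm{d}_{C^0}(f,g)+\mathrm{d}'_W(f,g)+\mathrm{d}'_W(f^{-1},g^{-1})$. *)

(* Defs.v *)
From Stdlib Require Import Reals Lra ClassicalEpsilon.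
Open Scope R_scope.

Definition pt := (R * R)%type.

Definition padd (p q : pt) : pt := (fst p + fst q, snd p + snd q).
Definition psub (p q : pt) : pt := (fst p - fst q, snd p - snd q).
Definition pnorm (p : pt) : R := sqrt (fst p ^ 2 + snd p ^ 2).
Definition dist (p q : pt) : R := pnorm (psub p q).

Definition inD (p : pt) : Prop := fst p ^ 2 + snd p ^ 2 <= 1.

(* 2x2 real matrices, stored as rows ((a,b),(c,d)) *)
Definition mat2 := (pt * pt)%type.
Definition mapply (A : mat2) (v : pt) : pt :=
  (fst (fst A) * fst v + snd (fst A) * snd v,
   fst (snd A) * fst v + snd (snd A) * snd v).
Definition msub (A B : mat2) : mat2 := (psub (fst A) (fst B), psub (snd A) (snd B)).
Definition mnorm (A : mat2) : R :=
  sqrt (fst (fst A) ^ 2 + snd (fst A) ^ 2 + fst (snd A) ^ 2 + snd (snd A) ^ 2).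
Definition mid : mat2 := ((1, 0), (0, 1)).

(* df p is the derivative (Jacobian) of f at p, relative to D (one-sided at
   the boundary); since D is convex with nonempty interior, it is unique. *)
Definition has_deriv_on_D (f : pt -> pt) (df : pt -> mat2) : Prop :=
  forall p, inD p -> forall eps, 0 < eps -> exists delta, 0 < delta /\
    forall q, inD q -> dist q p < delta ->
      pnorm (psub (psub (f q) (f p)) (mapply (df p) (psub q p))) <= eps * dist q p.

Definition cont_on_D (df : pt -> mat2) : Prop :=
  forall p, inD p -> forall eps, 0 < eps -> exists delta, 0 < delta /\
    forall q, inD q -> dist q p < delta -> mnorm (msub (df q) (df p)) < eps.

Definition C1_on_D (f : pt -> pt) (df : pt -> mat2) : Prop :=
  has_deriv_on_D f df /\ cont_on_D df.

Definition C1_diffeo_D (f g : pt -> pt) (df dg : pt -> mat2) : Prop :=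
  (forall p, inD p -> inD (f p)) /\ (forall p, inD p -> inD (g p)) /\
  (forall p, inD p -> g (f p) = p) /\ (forall p, inD p -> f (g p) = p) /\
  C1_on_D f df /\ C1_on_D g dg.

(* supremum of a set of reals (0 if empty or unbounded above; never used in
   those cases for C^1 maps of the compact disk) *)
Definition Rsup (E : R -> Prop) : R :=
  match excluded_middle_informative (bound E /\ exists x, E x) with
  | left H => proj1_sig (completeness E (proj1 H) (proj2 H))
  | right _ => 0
  end.

Definition dC0 (f finv g ginv : pt -> pt) : R :=
  Rsup (fun r => exists p, inD p /\ r = dist (f p) (g p)) +
  Rsup (fun r => exists p, inD p /\ r = dist (finv p) (ginv p)).

Definition dW' (f g : pt -> pt) : R :=
  Rsup (fun r => exists p q, inD p /\ inD q /\ p <> q /\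
          r = Rabs (dist (f p) (f q) - dist (g p) (g q)) / dist p q).

Definition dW (f finv g ginv : pt -> pt) : R :=
  dC0 f finv g ginv + dW' f g + dW' finv ginv.

Definition idD : pt -> pt := fun p => p.
Definition did : pt -> mat2 := fun _ => mid.

Definition C1_conv_to_id (f : nat -> pt -> pt) (df : nat -> pt -> mat2) : Prop :=
  forall eps, 0 < eps -> exists N, forall n, (n >= N)%nat ->
    forall p, inD p -> dist (f n p) p <= eps /\ mnorm (msub (df n p) mid) <= eps.

(* Main.v *)
Require Import Defs.
From Stdlib Require Import Reals.
From Stdlib Require Import Lra Psatz ClassicalEpsilon.
From Coquelicot Require Import Coquelicot.
Open Scope R_scope.

Lemma dpl_const c x y : differentiable_pt_lim (fun _ _ => c) x y 0 0.
Proof. intros eps. exists (mkposreal 1 Rlt_0_1). intros u v _ _.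
  replace (c - c - (0 * (u - x) + 0 * (v - y))) with 0 by ring. rewrite Rabs_R0.
  apply Rmult_le_pos. left; apply cond_pos. apply Rle_trans with (Rabs (u-x)); [apply Rabs_pos|apply Rmax_l]. Qed.

Lemma dpl_fst x y : differentiable_pt_lim (fun u _ => u) x y 1 0.
Proof. intros eps. exists (mkposreal 1 Rlt_0_1). intros u v _ _.
  replace (u - x - (1 * (u - x) + 0 * (v - y))) with 0 by ring. rewrite Rabs_R0.
  apply Rmult_le_pos. left; apply cond_pos. apply Rle_trans with (Rabs (u-x)); [apply Rabs_pos|apply Rmax_l]. Qed.

Lemma dpl_snd x y : differentiable_pt_lim (fun _ v => v) x y 0 1.
Proof. intros eps. exists (mkposreal 1 Rlt_0_1). intros u v _ _.
  replace (v - y - (0 * (u - x) + 1 * (v - y))) with 0 by ring. rewrite Rabs_R0.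
  apply Rmult_le_pos. left; apply cond_pos. apply Rle_trans with (Rabs (u-x)); [apply Rabs_pos|apply Rmax_l]. Qed.

Lemma dpl_add_base x y : differentiable_pt_lim (fun a b => a + b) x y 1 1.
Proof. intros eps. exists (mkposreal 1 Rlt_0_1). intros u v _ _.
  replace (u + v - (x + y) - (1 * (u - x) + 1 * (v - y))) with 0 by ring. rewrite Rabs_R0.
  apply Rmult_le_pos. left; apply cond_pos. apply Rle_trans with (Rabs (u-x)); [apply Rabs_pos|apply Rmax_l]. Qed.

Lemma dpl_mul_base x y : differentiable_pt_lim (fun a b => a * b) x y y x.
Proof. intros eps. exists eps. intros u v Hu Hv.
  replace (u * v - x * y - (y * (u - x) + x * (v - y))) with ((u-x)*(v-y)) by ring.
  rewrite Rabs_mult.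
  destruct (Rle_dec (Rabs (u-x)) (Rabs (v-y))).
  - rewrite Rmax_right by lra. apply Rmult_le_compat_r. apply Rabs_pos. lra.
  - rewrite Rmax_left by lra. rewrite (Rmult_comm eps). apply Rmult_le_compat_l. apply Rabs_pos. lra. Qed.

Lemma dpl_eq f x y a b a' b' : differentiable_pt_lim f x y a b -> a = a' -> b = b' ->
  differentiable_pt_lim f x y a' b'.
Proof. intros H -> ->; exact H. Qed.

Lemma dpl_add f g x y a b c d : differentiable_pt_lim f x y a b -> differentiable_pt_lim g x y c d ->
  differentiable_pt_lim (fun u v => f u v + g u v) x y (a + c) (b + d).
Proof. intros Hf Hg.
  eapply dpl_eq. apply (differentiable_pt_lim_comp (fun a b => a + b) f g); try eassumption.
  apply dpl_add_base. ring. ring. Qed.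

Lemma dpl_mul f g x y a b c d : differentiable_pt_lim f x y a b -> differentiable_pt_lim g x y c d ->
  differentiable_pt_lim (fun u v => f u v * g u v) x y (g x y * a + f x y * c) (g x y * b + f x y * d).
Proof. intros Hf Hg.
  apply (differentiable_pt_lim_comp (fun a b => a * b) f g); try eassumption.
  apply dpl_mul_base. Qed.

Lemma dpl_1d h g x y l a b : derivable_pt_lim h (g x y) l -> differentiable_pt_lim g x y a b ->
  differentiable_pt_lim (fun u v => h (g u v)) x y (l * a) (l * b).
Proof. intros Hh Hg.
  eapply dpl_eq. apply (differentiable_pt_lim_comp (fun a _ => h a) g g); try eassumption.
  apply differentiable_pt_lim_proj1_0. exact Hh. ring. ring. Qed.

Lemma dpl_fext f g x y a b : (forall u v, f u v = g u v) -> differentiable_pt_lim g x y a b ->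
  differentiable_pt_lim f x y a b.
Proof. intros E H. apply (differentiable_pt_lim_ext g). exists (mkposreal 1 Rlt_0_1).
  intros; symmetry; apply E. exact H. Qed.

Lemma dpl_sub f g x y a b c d : differentiable_pt_lim f x y a b -> differentiable_pt_lim g x y c d ->
  differentiable_pt_lim (fun u v => f u v - g u v) x y (a - c) (b - d).
Proof. intros Hf Hg.
  apply (dpl_fext _ (fun u v => f u v + -1 * g u v)). intros; ring.
  eapply dpl_eq. apply (dpl_add f (fun u v => -1 * g u v)). exact Hf.
  eapply dpl_eq. apply (dpl_mul (fun _ _ => -1) g). apply dpl_const. exact Hg.
  reflexivity. reflexivity. ring. ring. Qed.

Definition Th (k c u v : R) := k * ln (u*u + v*v + c).
Definition Thx k c u v := k * (2*u) / (u*u+v*v+c).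
Definition Thy k c u v := k * (2*v) / (u*u+v*v+c).
Definition tw1 k c u v := u * cos (Th k c u v) - v * sin (Th k c u v).
Definition tw2 k c u v := u * sin (Th k c u v) + v * cos (Th k c u v).
Definition d11 k c u v := cos (Th k c u v) - tw2 k c u v * Thx k c u v.
Definition d12 k c u v := - sin (Th k c u v) - tw2 k c u v * Thy k c u v.
Definition d21 k c u v := sin (Th k c u v) + tw1 k c u v * Thx k c u v.
Definition d22 k c u v := cos (Th k c u v) + tw1 k c u v * Thy k c u v.

Lemma pos_t c u v : 0 < c -> 0 < u*u+v*v+c.
Proof. intros; nra. Qed.

Lemma dpl_Th k c x y : 0 < c -> differentiable_pt_lim (Th k c) x y (Thx k c x y) (Thy k c x y).
Proof. intros Hc. pose proof (pos_t c x y Hc).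
  unfold Th. eapply dpl_eq.
  apply (dpl_mul (fun _ _ => k) (fun u v => ln (u*u+v*v+c))). apply dpl_const.
  apply (dpl_1d ln (fun u v => u*u+v*v+c)). apply derivable_pt_lim_ln. exact H.
  apply (dpl_add (fun u v => u*u+v*v) (fun _ _ => c)).
  apply (dpl_add (fun u v => u*u) (fun u v => v*v)).
  apply (dpl_mul (fun u _ => u) (fun u _ => u)); apply dpl_fst.
  apply (dpl_mul (fun _ v => v) (fun _ v => v)); apply dpl_snd.
  apply dpl_const.
  unfold Thx; field; lra. unfold Thy; field; lra. Qed.

Lemma dpl_tw1 k c x y : 0 < c -> differentiable_pt_lim (tw1 k c) x y (d11 k c x y) (d12 k c x y).
Proof. intros Hc. unfold tw1. eapply dpl_eq.
  apply (dpl_sub (fun u v => u * cos (Th k c u v)) (fun u v => v * sin (Th k c u v))).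
  apply (dpl_mul (fun u _ => u) (fun u v => cos (Th k c u v))). apply dpl_fst.
  apply (dpl_1d cos (Th k c)). apply derivable_pt_lim_cos. apply dpl_Th; auto.
  apply (dpl_mul (fun _ v => v) (fun u v => sin (Th k c u v))). apply dpl_snd.
  apply (dpl_1d sin (Th k c)). apply derivable_pt_lim_sin. apply dpl_Th; auto.
  unfold d11, tw2; ring. unfold d12, tw2; ring. Qed.

Lemma dpl_tw2 k c x y : 0 < c -> differentiable_pt_lim (tw2 k c) x y (d21 k c x y) (d22 k c x y).
Proof. intros Hc. unfold tw2. eapply dpl_eq.
  apply (dpl_add (fun u v => u * sin (Th k c u v)) (fun u v => v * cos (Th k c u v))).
  apply (dpl_mul (fun u _ => u) (fun u v => sin (Th k c u v))). apply dpl_fst.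
  apply (dpl_1d sin (Th k c)). apply derivable_pt_lim_sin. apply dpl_Th; auto.
  apply (dpl_mul (fun _ v => v) (fun u v => cos (Th k c u v))). apply dpl_snd.
  apply (dpl_1d cos (Th k c)). apply derivable_pt_lim_cos. apply dpl_Th; auto.
  unfold d21, tw1; ring. unfold d22, tw1; ring. Qed.

Lemma c2_ext f g x y : (forall u v, f u v = g u v) -> continuity_2d_pt g x y -> continuity_2d_pt f x y.
Proof. intros E H. apply (continuity_2d_pt_ext g f). intros; symmetry; apply E. exact H. Qed.

Lemma c2_t c x y : continuity_2d_pt (fun u v => u*u+v*v+c) x y.
Proof. apply (continuity_2d_pt_plus (fun u v => u*u+v*v) (fun _ _ => c)).
  apply (continuity_2d_pt_plus (fun u v => u*u) (fun u v => v*v)).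
  apply (continuity_2d_pt_mult (fun u _ => u) (fun u _ => u)); apply continuity_2d_pt_id1.
  apply (continuity_2d_pt_mult (fun _ v => v) (fun _ v => v)); apply continuity_2d_pt_id2.
  apply continuity_2d_pt_const. Qed.

Lemma c2_Th k c x y : 0 < c -> continuity_2d_pt (Th k c) x y.
Proof. intros Hc. unfold Th.
  apply (continuity_2d_pt_mult (fun _ _ => k) (fun u v => ln (u*u+v*v+c))). apply continuity_2d_pt_const.
  apply (continuity_1d_2d_pt_comp ln (fun u v => u*u+v*v+c)).
  apply derivable_continuous_pt. exists (/ (x*x+y*y+c)). apply derivable_pt_lim_ln. apply pos_t; auto.
  apply c2_t. Qed.

Lemma c2_Thx k c x y : 0 < c -> continuity_2d_pt (Thx k c) x y.
Proof. intros Hc. unfold Thx, Rdiv.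
  apply (continuity_2d_pt_mult (fun u _ => k * (2*u)) (fun u v => / (u*u+v*v+c))).
  apply (continuity_2d_pt_mult (fun _ _ => k) (fun u _ => 2*u)). apply continuity_2d_pt_const.
  apply (continuity_2d_pt_mult (fun _ _ => 2) (fun u _ => u)). apply continuity_2d_pt_const. apply continuity_2d_pt_id1.
  apply (continuity_2d_pt_inv (fun u v => u*u+v*v+c)). apply c2_t. pose proof (pos_t c x y Hc); lra. Qed.

Lemma c2_Thy k c x y : 0 < c -> continuity_2d_pt (Thy k c) x y.
Proof. intros Hc. unfold Thy, Rdiv.
  apply (continuity_2d_pt_mult (fun _ v => k * (2*v)) (fun u v => / (u*u+v*v+c))).
  apply (continuity_2d_pt_mult (fun _ _ => k) (fun _ v => 2*v)). apply continuity_2d_pt_const.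
  apply (continuity_2d_pt_mult (fun _ _ => 2) (fun _ v => v)). apply continuity_2d_pt_const. apply continuity_2d_pt_id2.
  apply (continuity_2d_pt_inv (fun u v => u*u+v*v+c)). apply c2_t. pose proof (pos_t c x y Hc); lra. Qed.

Lemma c2_cos k c x y : 0 < c -> continuity_2d_pt (fun u v => cos (Th k c u v)) x y.
Proof. intros. apply (continuity_1d_2d_pt_comp cos (Th k c)). apply continuity_cos. apply c2_Th; auto. Qed.
Lemma c2_sin k c x y : 0 < c -> continuity_2d_pt (fun u v => sin (Th k c u v)) x y.
Proof. intros. apply (continuity_1d_2d_pt_comp sin (Th k c)). apply continuity_sin. apply c2_Th; auto. Qed.

Lemma c2_tw1 k c x y : 0 < c -> continuity_2d_pt (tw1 k c) x y.
Proof. intros. unfold tw1.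
  apply (continuity_2d_pt_minus (fun u v => u * cos (Th k c u v)) (fun u v => v * sin (Th k c u v))).
  apply (continuity_2d_pt_mult (fun u _ => u) (fun u v => cos (Th k c u v))). apply continuity_2d_pt_id1. apply c2_cos; auto.
  apply (continuity_2d_pt_mult (fun _ v => v) (fun u v => sin (Th k c u v))). apply continuity_2d_pt_id2. apply c2_sin; auto. Qed.
Lemma c2_tw2 k c x y : 0 < c -> continuity_2d_pt (tw2 k c) x y.
Proof. intros. unfold tw2.
  apply (continuity_2d_pt_plus (fun u v => u * sin (Th k c u v)) (fun u v => v * cos (Th k c u v))).
  apply (continuity_2d_pt_mult (fun u _ => u) (fun u v => sin (Th k c u v))). apply continuity_2d_pt_id1. apply c2_sin; auto.
  apply (continuity_2d_pt_mult (fun _ v => v) (fun u v => cos (Th k c u v))). apply continuity_2d_pt_id2. apply c2_cos; auto. Qed.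

Lemma c2_d11 k c x y : 0 < c -> continuity_2d_pt (d11 k c) x y.
Proof. intros. unfold d11.
  apply (continuity_2d_pt_minus (fun u v => cos (Th k c u v)) (fun u v => tw2 k c u v * Thx k c u v)).
  apply c2_cos; auto. apply (continuity_2d_pt_mult (tw2 k c) (Thx k c)). apply c2_tw2; auto. apply c2_Thx; auto. Qed.
Lemma c2_d12 k c x y : 0 < c -> continuity_2d_pt (d12 k c) x y.
Proof. intros. unfold d12.
  apply (continuity_2d_pt_minus (fun u v => - sin (Th k c u v)) (fun u v => tw2 k c u v * Thy k c u v)).
  apply (continuity_2d_pt_opp (fun u v => sin (Th k c u v))). apply c2_sin; auto. apply (continuity_2d_pt_mult (tw2 k c) (Thy k c)). apply c2_tw2; auto. apply c2_Thy; auto. Qed.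
Lemma c2_d21 k c x y : 0 < c -> continuity_2d_pt (d21 k c) x y.
Proof. intros. unfold d21.
  apply (continuity_2d_pt_plus (fun u v => sin (Th k c u v)) (fun u v => tw1 k c u v * Thx k c u v)).
  apply c2_sin; auto. apply (continuity_2d_pt_mult (tw1 k c) (Thx k c)). apply c2_tw1; auto. apply c2_Thx; auto. Qed.
Lemma c2_d22 k c x y : 0 < c -> continuity_2d_pt (d22 k c) x y.
Proof. intros. unfold d22.
  apply (continuity_2d_pt_plus (fun u v => cos (Th k c u v)) (fun u v => tw1 k c u v * Thy k c u v)).
  apply c2_cos; auto. apply (continuity_2d_pt_mult (tw1 k c) (Thy k c)). apply c2_tw1; auto. apply c2_Thy; auto. Qed.

Definition tw k c (p : pt) : pt := (tw1 k c (fst p) (snd p), tw2 k c (fst p) (snd p)).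
Definition dtw k c (p : pt) : mat2 :=
  ((d11 k c (fst p) (snd p), d12 k c (fst p) (snd p)),
   (d21 k c (fst p) (snd p), d22 k c (fst p) (snd p))).

Lemma sqrt_le_of X Y : 0 <= Y -> X <= Y * Y -> sqrt X <= Y.
Proof. intros HY H. rewrite <- (sqrt_square Y HY). apply sqrt_le_1_alt. exact H. Qed.

Lemma pnorm_le_abs a b : pnorm (a, b) <= Rabs a + Rabs b.
Proof. unfold pnorm; cbn [fst snd]. apply sqrt_le_of. pose proof (Rabs_pos a); pose proof (Rabs_pos b); lra.
  pose proof (Rabs_pos a); pose proof (Rabs_pos b).
  rewrite <- (pow2_abs a), <- (pow2_abs b). nra. Qed.

Lemma abs_fst_le p : Rabs (fst p) <= pnorm p.
Proof. unfold pnorm. rewrite <- sqrt_Rsqr_abs. apply sqrt_le_1_alt. unfold Rsqr. nra. Qed.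
Lemma abs_snd_le p : Rabs (snd p) <= pnorm p.
Proof. unfold pnorm. rewrite <- sqrt_Rsqr_abs. apply sqrt_le_1_alt. unfold Rsqr. nra. Qed.

Lemma mnorm_le_abs a b c d : mnorm ((a,b),(c,d)) <= Rabs a + Rabs b + Rabs c + Rabs d.
Proof. unfold mnorm; cbn [fst snd]. pose proof (Rabs_pos a); pose proof (Rabs_pos b);
  pose proof (Rabs_pos c); pose proof (Rabs_pos d). apply sqrt_le_of. lra.
  rewrite <- (pow2_abs a), <- (pow2_abs b), <- (pow2_abs c), <- (pow2_abs d). nra. Qed.

Lemma tw_deriv k c : 0 < c -> has_deriv_on_D (tw k c) (dtw k c).
Proof. intros Hc p _ eps Heps.
  destruct (dpl_tw1 k c (fst p) (snd p) Hc (mkposreal (eps/2) ltac:(lra))) as [d1 H1].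
  destruct (dpl_tw2 k c (fst p) (snd p) Hc (mkposreal (eps/2) ltac:(lra))) as [d2 H2].
  exists (Rmin d1 d2). split. apply Rmin_pos; apply cond_pos.
  intros q _ Hq. unfold Defs.dist in Hq.
  pose proof (abs_fst_le (psub q p)) as F. pose proof (abs_snd_le (psub q p)) as S.
  simpl in F, S.
  assert (Hm : Rmax (Rabs (fst q - fst p)) (Rabs (snd q - snd p)) <= Defs.dist q p).
  { apply Rmax_lub; assumption. }
  pose proof (Rmin_l d1 d2); pose proof (Rmin_r d1 d2).
  specialize (H1 (fst q) (snd q) ltac:(lra) ltac:(lra)).
  specialize (H2 (fst q) (snd q) ltac:(lra) ltac:(lra)). simpl in H1, H2.
  eapply Rle_trans. apply pnorm_le_abs.
  assert (0 <= eps/2) by lra.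
  pose proof (Rmult_le_compat_l (eps/2) _ _ H3 Hm).
  unfold tw, dtw, mapply; simpl. lra. Qed.

Lemma tw_cont k c : 0 < c -> cont_on_D (dtw k c).
Proof. intros Hc p _ eps Heps.
  destruct (c2_d11 k c (fst p) (snd p) Hc (mkposreal (eps/5) ltac:(lra))) as [e1 H1].
  destruct (c2_d12 k c (fst p) (snd p) Hc (mkposreal (eps/5) ltac:(lra))) as [e2 H2].
  destruct (c2_d21 k c (fst p) (snd p) Hc (mkposreal (eps/5) ltac:(lra))) as [e3 H3].
  destruct (c2_d22 k c (fst p) (snd p) Hc (mkposreal (eps/5) ltac:(lra))) as [e4 H4].
  exists (Rmin (Rmin e1 e2) (Rmin e3 e4)). split.
  apply Rmin_pos; apply Rmin_pos; apply cond_pos.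
  intros q _ Hq. unfold Defs.dist in Hq.
  pose proof (abs_fst_le (psub q p)) as F. pose proof (abs_snd_le (psub q p)) as S.
  simpl in F, S.
  pose proof (Rmin_l (Rmin e1 e2) (Rmin e3 e4)); pose proof (Rmin_r (Rmin e1 e2) (Rmin e3 e4)).
  pose proof (Rmin_l e1 e2); pose proof (Rmin_r e1 e2);pose proof (Rmin_l e3 e4); pose proof (Rmin_r e3 e4).
  specialize (H1 (fst q) (snd q) ltac:(lra) ltac:(lra)).
  specialize (H2 (fst q) (snd q) ltac:(lra) ltac:(lra)).
  specialize (H3 (fst q) (snd q) ltac:(lra) ltac:(lra)).
  specialize (H4 (fst q) (snd q) ltac:(lra) ltac:(lra)). simpl in H1, H2, H3, H4.
  unfold msub, psub, dtw; simpl. eapply Rle_lt_trans. apply mnorm_le_abs. lra. Qed.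
Ltac fld := field; repeat split; try (apply Rgt_not_eq; nra).

Lemma sc a : sin a * sin a + cos a * cos a = 1.
Proof. pose proof (sin2_cos2 a). unfold Rsqr in H. exact H. Qed.

Lemma ln_le_mono x y : 0 < x -> x <= y -> ln x <= ln y.
Proof. intros H1 H2. destruct (Req_dec x y) as [->|]. lra. left; apply ln_increasing; lra. Qed.

Lemma ln_le_xm1 x : 0 < x -> ln x <= x - 1.
Proof. intros H. pose proof (exp_ineq1_le (ln x)). rewrite exp_ln in H0 by auto. lra. Qed.

Lemma ln_diff_bound s r c : 0 <= s -> s <= r -> 0 < c ->
  0 <= ln (r*r + c) - ln (s*s + c) /\ s * (ln (r*r + c) - ln (s*s + c)) <= 2 * (r - s).
Proof. intros Hs Hsr Hc. split.
  - pose proof (ln_le_mono (s*s+c) (r*r+c) ltac:(nra) ltac:(nra)). lra.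
  - destruct (Req_dec s 0) as [->|Hs0]. lra.
    assert (Hsp : 0 < s) by lra.
    assert (E1 : ln (r*r+c) - ln (s*s+c) = ln ((r*r+c) * / (s*s+c))).
    { rewrite ln_mult by (try apply Rinv_0_lt_compat; nra). rewrite ln_Rinv by nra. ring. }
    assert (E2 : ln ((r * / s) * (r * / s)) = 2 * ln (r * / s)).
    { rewrite ln_mult. ring. apply Rmult_lt_0_compat; [lra| apply Rinv_0_lt_compat; lra].
      apply Rmult_lt_0_compat; [lra| apply Rinv_0_lt_compat; lra]. }
    assert (Hrs : 0 < r * / s) by (apply Rmult_lt_0_compat; [lra| apply Rinv_0_lt_compat; lra]).
    assert (L : ln ((r*r+c) * / (s*s+c)) <= ln ((r * / s) * (r * / s))).
    { apply ln_le_mono. apply Rmult_lt_0_compat; [nra| apply Rinv_0_lt_compat; nra].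
      replace ((r * / s) * (r * / s)) with ((r*r) * / (s*s)) by fld.
      apply (Rmult_le_reg_r ((s*s+c)*(s*s))). apply Rmult_lt_0_compat; nra.
      replace ((r * r + c) * / (s * s + c) * ((s * s + c) * (s * s))) with ((r*r+c)*(s*s)) by fld.
      replace (r * r * / (s * s) * ((s * s + c) * (s * s))) with (r*r*(s*s+c)) by fld. assert (s*s <= r*r) by nra. nra. }
    pose proof (ln_le_xm1 _ Hrs).
    rewrite E1. eapply Rle_trans. apply Rmult_le_compat_l. lra. apply L.
    rewrite E2. replace (2 * (r - s)) with (s * (2 * (r * / s - 1))) by fld.
    apply Rmult_le_compat_l. lra. lra. Qed.

Lemma ln_small_bound s c : 0 <= s <= 1 -> 0 < c <= 1 -> s * Rabs (ln (s*s + c)) <= 2.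
Proof. intros Hs Hc.
  destruct (Rle_dec 1 (s*s+c)).
  - pose proof (ln_le_mono 1 (s*s+c) ltac:(lra) r). rewrite ln_1 in H.
    pose proof (ln_le_xm1 (s*s+c) ltac:(lra)). rewrite Rabs_right by lra. nra.
  - destruct (Req_dec s 0) as [->|Hs0]. lra.
    assert (Hsp : 0 < s) by lra.
    pose proof (ln_le_mono (s*s) (s*s+c) ltac:(nra) ltac:(lra)).
    pose proof (ln_le_mono (s*s+c) 1 ltac:(nra) ltac:(lra)). rewrite ln_1 in H0.
    rewrite Rabs_left1 by lra.
    rewrite ln_mult in H by lra.
    pose proof (ln_le_xm1 (/ s) ltac:(apply Rinv_0_lt_compat; lra)). rewrite ln_Rinv in H1 by lra.
    apply Rle_trans with (s * (2 * (/ s - 1))). apply Rmult_le_compat_l; lra.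
    replace (s * (2 * (/ s - 1))) with (2 - 2*s) by fld. lra. Qed.

Lemma one_minus_cos d : 2 * (1 - cos d) <= d * d.
Proof. replace d with (2 * (d/2)) at 1 by field. rewrite cos_2a_sin.
  assert (Rabs (sin (d/2)) <= Rabs (d/2)).
  { pose proof (SIN_bound (d/2)) as SB.
    destruct (Rtotal_order (d/2) 0) as [Hn|[Hn|Hn]].
    - rewrite (Rabs_left (d/2)) by lra. pose proof (sin_lt_x (-(d/2)) ltac:(lra)) as Q. rewrite sin_neg in Q.
      apply Rabs_le. split. lra.
      destruct (Rle_dec (-(d/2)) 2). 2: lra.
      destruct (Req_dec (d/2) (-2)). lra.
      pose proof (sin_pos_tech (-(d/2)) ltac:(lra)) as Q2. rewrite sin_neg in Q2. lra.
    - rewrite Hn, sin_0, Rabs_R0. lra.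
    - rewrite (Rabs_right (d/2)) by lra. pose proof (sin_lt_x (d/2) Hn) as Q.
      apply Rabs_le. split. 2: lra.
      destruct (Rle_dec (d/2) 2). 2: lra.
      destruct (Req_dec (d/2) 2). lra.
      pose proof (sin_pos_tech (d/2) ltac:(lra)) as Q2. lra. }
  pose proof (Rabs_pos (sin (d/2))).
  assert (Rabs (sin (d/2)) * Rabs (sin (d/2)) <= Rabs (d/2) * Rabs (d/2)) by nra.
  rewrite <- !Rabs_mult in H1. rewrite !Rabs_right in H1 by nra. nra. Qed.

Definition rot a (p : pt) : pt := (fst p * cos a - snd p * sin a, fst p * sin a + snd p * cos a).
Definition sqn (p : pt) := fst p * fst p + snd p * snd p.

Lemma pnorm_sqn p : pnorm p = sqrt (sqn p).
Proof. unfold pnorm, sqn. f_equal. ring. Qed.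

Lemma sqn_ge0 p : 0 <= sqn p.
Proof. unfold sqn; nra. Qed.

Lemma sqn_rot a p : sqn (rot a p) = sqn p.
Proof. unfold sqn, rot; cbn [fst snd]. pose proof (sc a).
  replace ((fst p * cos a - snd p * sin a) * (fst p * cos a - snd p * sin a) +
    (fst p * sin a + snd p * cos a) * (fst p * sin a + snd p * cos a))
  with ((fst p * fst p + snd p * snd p) * (sin a * sin a + cos a * cos a)) by ring.
  rewrite H; ring. Qed.

Lemma pnorm_rot a p : pnorm (rot a p) = pnorm p.
Proof. rewrite !pnorm_sqn, sqn_rot; auto. Qed.

Lemma rot_inv a p : rot (- a) (rot a p) = p.
Proof. unfold rot; cbn [fst snd]. rewrite cos_neg, sin_neg. pose proof (sc a).
  destruct p as [x y]; cbn [fst snd]. f_equal.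
  replace ((x * cos a - y * sin a) * cos a - (x * sin a + y * cos a) * - sin a) with (x * (sin a * sin a + cos a * cos a)) by ring. rewrite H; ring.
  replace ((x * cos a - y * sin a) * - sin a + (x * sin a + y * cos a) * cos a) with (y * (sin a * sin a + cos a * cos a)) by ring. rewrite H; ring. Qed.

Lemma rot0 p : rot 0 p = p.
Proof. unfold rot. rewrite cos_0, sin_0. destruct p; cbn [fst snd]; f_equal; ring. Qed.

Lemma tw_rot k c p : tw k c p = rot (Th k c (fst p) (snd p)) p.
Proof. reflexivity. Qed.

Notation dst := Defs.dist.

Lemma dst_sqn p q : dst p q = sqrt (sqn (psub p q)).
Proof. unfold Defs.dist. apply pnorm_sqn. Qed.

Lemma dst_ge0 p q : 0 <= dst p q.
Proof. rewrite dst_sqn; apply sqrt_pos. Qed.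

Lemma dst_sym p q : dst p q = dst q p.
Proof. rewrite !dst_sqn. unfold sqn, psub; cbn [fst snd]. f_equal; ring. Qed.

Lemma dst_rot a p q : dst (rot a p) (rot a q) = dst p q.
Proof. rewrite !dst_sqn. rewrite <- (sqn_rot a (psub p q)). f_equal. unfold sqn, rot, psub; cbn [fst snd]. ring. Qed.

Lemma cs_ineq u v : fst u * fst v + snd u * snd v <= sqrt (sqn u) * sqrt (sqn v).
Proof. rewrite <- sqrt_mult by apply sqn_ge0.
  destruct (Rle_dec (fst u * fst v + snd u * snd v) 0). pose proof (sqrt_pos (sqn u * sqn v)); lra.
  rewrite <- (sqrt_square (fst u * fst v + snd u * snd v)) by lra.
  apply sqrt_le_1_alt. unfold sqn. pose proof (pow2_ge_0 (fst u * snd v - snd u * fst v)). nra. Qed.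

Lemma dst_tri a b c : dst a c <= dst a b + dst b c.
Proof. rewrite !dst_sqn. pose proof (sqrt_pos (sqn (psub a b))). pose proof (sqrt_pos (sqn (psub b c))).
  apply sqrt_le_of. lra.
  pose proof (cs_ineq (psub a b) (psub b c)).
  pose proof (sqrt_sqrt _ (sqn_ge0 (psub a b))). pose proof (sqrt_sqrt _ (sqn_ge0 (psub b c))).
  replace (sqn (psub a c)) with (sqn (psub a b) + sqn (psub b c) + 2 * (fst (psub a b) * fst (psub b c) + snd (psub a b) * snd (psub b c))).
  nra. unfold sqn, psub; cbn [fst snd]; ring. Qed.

Lemma rot_diff a b q : dst (rot a q) (rot b q) <= Rabs (a - b) * pnorm q.
Proof. rewrite dst_sqn, pnorm_sqn. apply sqrt_le_of.
  apply Rmult_le_pos. apply Rabs_pos. apply sqrt_pos.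
  replace (Rabs (a - b) * sqrt (sqn q) * (Rabs (a - b) * sqrt (sqn q))) with
    ((Rabs (a-b) * Rabs (a-b)) * (sqrt (sqn q) * sqrt (sqn q))) by ring.
  rewrite sqrt_sqrt by apply sqn_ge0. rewrite <- Rabs_mult, Rabs_right by (apply Rle_ge; apply Rle_0_sqr).
  replace (sqn (psub (rot a q) (rot b q))) with (sqn q * (2 * (1 - cos (a - b)))).
  pose proof (one_minus_cos (a-b)). pose proof (sqn_ge0 q). nra.
  rewrite cos_minus. pose proof (sc a). pose proof (sc b).
  unfold sqn, rot, psub; cbn [fst snd].
  replace (2 * (1 - (cos a * cos b + sin a * sin b))) with
    ((sin a * sin a + cos a * cos a) + (sin b * sin b + cos b * cos b) - 2 * (cos a * cos b + sin a * sin b)) by (rewrite H, H0; ring).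
  ring. Qed.

Lemma pnorm_dst p : pnorm p = dst p (0,0).
Proof. unfold Defs.dist. f_equal. destruct p; unfold psub; cbn [fst snd]; f_equal; ring. Qed.

Lemma rev_tri p q : Rabs (pnorm p - pnorm q) <= dst p q.
Proof. rewrite !pnorm_dst. apply Rabs_le. pose proof (dst_tri p q (0,0)). pose proof (dst_tri q p (0,0)).
  rewrite (dst_sym q p) in H0. lra. Qed.

Lemma tw_sqn k c p : sqn (tw k c p) = sqn p.
Proof. rewrite tw_rot. apply sqn_rot. Qed.

Lemma Th_sqn k c p : Th k c (fst p) (snd p) = k * ln (sqn p + c).
Proof. reflexivity. Qed.

Lemma tw_inv k c p : tw (-k) c (tw k c p) = p.
Proof. rewrite (tw_rot (-k)). rewrite Th_sqn, tw_sqn. rewrite tw_rot, Th_sqn.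
  replace (- k * ln (sqn p + c)) with (- (k * ln (sqn p + c))) by ring. apply rot_inv. Qed.

Lemma inD_sqn p : inD p <-> sqn p <= 1.
Proof. unfold inD, sqn. replace (fst p ^ 2 + snd p ^ 2) with (fst p * fst p + snd p * snd p) by ring. tauto. Qed.

Lemma tw_inD k c p : inD p -> inD (tw k c p).
Proof. rewrite !inD_sqn, tw_sqn. auto. Qed.

Lemma pnorm_sq p : pnorm p * pnorm p = sqn p.
Proof. rewrite pnorm_sqn. apply sqrt_sqrt, sqn_ge0. Qed.

Lemma pnorm_ge0 p : 0 <= pnorm p.
Proof. unfold pnorm; apply sqrt_pos. Qed.

Lemma Th_diff_bound k c p q : 0 < c -> pnorm p <= pnorm q ->
  Rabs (Th k c (fst p) (snd p) - Th k c (fst q) (snd q)) * pnorm p <= 2 * Rabs k * dst p q.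
Proof. intros Hc Hpq. rewrite !Th_sqn. rewrite <- !pnorm_sq.
  destruct (ln_diff_bound (pnorm p) (pnorm q) c (pnorm_ge0 p) Hpq Hc) as [L1 L2].
  replace (k * ln (pnorm p * pnorm p + c) - k * ln (pnorm q * pnorm q + c)) with
    (- k * (ln (pnorm q * pnorm q + c) - ln (pnorm p * pnorm p + c))) by ring.
  rewrite Rabs_mult, Rabs_Ropp, (Rabs_right (_ - _)) by lra.
  pose proof (rev_tri p q). rewrite Rabs_left1 in H by lra.
  pose proof (Rabs_pos k). rewrite Rmult_assoc.
  apply Rle_trans with (Rabs k * (2 * (pnorm q - pnorm p))).
  apply Rmult_le_compat_l. lra. lra. nra. Qed.

Lemma tw_dist_bound k c p q : 0 < c ->
  Rabs (dst (tw k c p) (tw k c q) - dst p q) <= 2 * Rabs k * dst p q.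
Proof. intros Hc. rewrite !tw_rot.
  set (a := Th k c (fst p) (snd p)). set (b := Th k c (fst q) (snd q)).
  pose proof (dst_tri (rot a p) (rot a q) (rot b q)) as T1.
  pose proof (dst_tri (rot a p) (rot b p) (rot b q)) as T2.
  pose proof (dst_tri (rot a p) (rot b q) (rot a q)) as T3.
  pose proof (dst_tri (rot b p) (rot a p) (rot b q)) as T4.
  rewrite !dst_rot in T1, T2, T3, T4.
  pose proof (rot_diff a b q) as R1. pose proof (rot_diff b a p) as R2.
  rewrite dst_sym in R2.
  rewrite (dst_sym (rot b q) (rot a q)) in T3. rewrite (dst_sym (rot b p) (rot a p)) in T4.
  rewrite (Rabs_minus_sym b a) in R2.
  destruct (Rle_dec (pnorm p) (pnorm q)).
  - pose proof (Th_diff_bound k c p q Hc r). fold a b in H.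
    apply Rabs_le. lra.
  - pose proof (Th_diff_bound k c q p Hc ltac:(lra)). fold a b in H.
    rewrite dst_sym, (Rabs_minus_sym b a) in H.
    apply Rabs_le. lra. Qed.

Lemma tw_c0 k c p : 0 < c <= 1 -> inD p -> dst (tw k c p) p <= 2 * Rabs k.
Proof. intros Hc Hp. rewrite tw_rot. set (a := Th k c (fst p) (snd p)).
  replace (dst (rot a p) p) with (dst (rot a p) (rot 0 p)) by (rewrite rot0; reflexivity).
  eapply Rle_trans. apply rot_diff. unfold a. rewrite Rminus_0_r, Th_sqn, <- pnorm_sq.
  rewrite Rabs_mult. rewrite inD_sqn, <- pnorm_sq in Hp.
  pose proof (pnorm_ge0 p).
  pose proof (ln_small_bound (pnorm p) c ltac:(split; nra) Hc). pose proof (Rabs_pos k).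
  pose proof (Rabs_pos (ln (pnorm p * pnorm p + c))).
  rewrite Rmult_assoc. rewrite (Rmult_comm _ (pnorm p)). rewrite (Rmult_comm 2).
  apply Rmult_le_compat_l; lra. Qed.

Lemma Rsup_bound (E : R -> Prop) B : 0 <= B -> (forall r, E r -> 0 <= r <= B) -> 0 <= Rsup E <= B.
Proof. intros HB HE. unfold Rsup.
  destruct (excluded_middle_informative _) as [[Hb [x Hx]]|]. 2: lra.
  destruct (completeness E _ _) as [s [Hub Hlub]]. simpl. split.
  - specialize (HE x Hx). specialize (Hub x Hx). lra.
  - apply Hlub. intros r Hr. apply HE; auto. Qed.

Lemma dst_pos p q : p <> q -> 0 < dst p q.
Proof. intros H. rewrite dst_sqn. apply sqrt_lt_R0. unfold sqn, psub; cbn [fst snd].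
  destruct (Req_dec (fst p) (fst q)). destruct (Req_dec (snd p) (snd q)).
  exfalso. apply H. destruct p, q; cbn [fst snd] in *; subst; reflexivity.
  assert (snd p - snd q <> 0) by lra. pose proof (Rsqr_pos_lt _ H2). pose proof (Rle_0_sqr (fst p - fst q)). unfold Rsqr in *. lra.
  assert (fst p - fst q <> 0) by lra. pose proof (Rsqr_pos_lt _ H1). pose proof (Rle_0_sqr (snd p - snd q)). unfold Rsqr in *. lra. Qed.

Lemma dW'_tw k c : 0 < c -> 0 <= dW' (tw k c) idD <= 2 * Rabs k.
Proof. intros Hc. unfold dW'. apply Rsup_bound. pose proof (Rabs_pos k); lra.
  intros r [p [q [_ [_ [Hpq ->]]]]]. unfold idD.
  pose proof (dst_pos p q Hpq). pose proof (tw_dist_bound k c p q Hc).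
  split. apply Rmult_le_pos. apply Rabs_pos. left; apply Rinv_0_lt_compat; auto.
  apply (Rmult_le_reg_r (dst p q)). auto. unfold Rdiv. rewrite Rmult_assoc, Rinv_l by lra. lra. Qed.

Lemma dC0_tw k c : 0 < c <= 1 -> 0 <= dC0 (tw k c) (tw (-k) c) idD idD <= 4 * Rabs k.
Proof. intros Hc. unfold dC0.
  assert (0 <= Rsup (fun r => exists p, inD p /\ r = dst (tw k c p) (idD p)) <= 2 * Rabs k).
  { apply Rsup_bound. pose proof (Rabs_pos k); lra. intros r [p [Hp ->]]. split. apply dst_ge0. apply tw_c0; auto. }
  assert (0 <= Rsup (fun r => exists p, inD p /\ r = dst (tw (-k) c p) (idD p)) <= 2 * Rabs k).
  { apply Rsup_bound. pose proof (Rabs_pos k); lra. intros r [p [Hp ->]]. split. apply dst_ge0.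
    rewrite <- (Rabs_Ropp k). apply tw_c0; auto. }
  lra. Qed.

Lemma dW_tw k c : 0 < c <= 1 -> 0 <= dW (tw k c) (tw (-k) c) idD idD <= 8 * Rabs k.
Proof. intros Hc. unfold dW. pose proof (dC0_tw k c Hc). pose proof (dW'_tw k c ltac:(lra)).
  pose proof (dW'_tw (-k) c ltac:(lra)). rewrite Rabs_Ropp in H1. lra. Qed.

Definition kn (n : nat) := - PI / (INR n + 1).
Definition cn (n : nat) := exp (- (INR n + 1)).

Lemma cn_bounds n : 0 < cn n <= 1.
Proof. unfold cn. split. apply exp_pos. pose proof (pos_INR n).
  assert (exp (-(INR n+1)) < exp 0) by (apply exp_increasing; lra). rewrite exp_0 in H0. lra. Qed.

Theorem mainTheorem16 :
  exists (f finv : nat -> pt -> pt) (df dfinv : nat -> pt -> mat2),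
    (forall n, C1_diffeo_D (f n) (finv n) (df n) (dfinv n)) /\
    ~ C1_conv_to_id f df /\
    Un_cv (fun n => dW (f n) (finv n) idD idD) 0.
Proof.
  exists (fun n => tw (kn n) (cn n)), (fun n => tw (- kn n) (cn n)),
    (fun n => dtw (kn n) (cn n)), (fun n => dtw (- kn n) (cn n)).
  split; [|split].
  - intros n. pose proof (cn_bounds n) as Hc. unfold C1_diffeo_D.
    split; [|split; [|split; [|split; [|split]]]].
    + intros; apply tw_inD; auto.
    + intros; apply tw_inD; auto.
    + intros; apply tw_inv.
    + intros p _. pose proof (tw_inv (- kn n) (cn n) p). rewrite Ropp_involutive in H. exact H.
    + split. apply tw_deriv; lra. apply tw_cont; lra.
    + split. apply tw_deriv; lra. apply tw_cont; lra.
  - intros Hconv. destruct (Hconv 1 Rlt_0_1) as [N HN].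
    destruct (HN N (le_n N) (0,0)) as [_ H]. { unfold inD; cbn [fst snd]. lra. }
    assert (ETh : Th (kn N) (cn N) 0 0 = PI).
    { unfold Th, kn, cn. replace (0*0+0*0+exp (-(INR N + 1))) with (exp (-(INR N + 1))) by ring.
      rewrite ln_exp. pose proof (pos_INR N). field. lra. }
    assert (EThx : Thx (kn N) (cn N) 0 0 = 0) by (unfold Thx; unfold Rdiv; ring).
    assert (EThy : Thy (kn N) (cn N) 0 0 = 0) by (unfold Thy; unfold Rdiv; ring).
    unfold dtw, d11, d12, d21, d22, msub, mid, psub, mnorm in H. cbn [fst snd] in H.
    rewrite ETh, EThx, EThy, cos_PI, sin_PI in H.
    replace ((-1 - tw2 (kn N) (cn N) 0 0 * 0 - 1) ^ 2 + (- 0 - tw2 (kn N) (cn N) 0 0 * 0 - 0) ^ 2 +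
      (0 + tw1 (kn N) (cn N) 0 0 * 0 - 0) ^ 2 + (-1 + tw1 (kn N) (cn N) 0 0 * 0 - 1) ^ 2) with 8 in H by ring.
    rewrite <- sqrt_1 in H. apply sqrt_le_0 in H; lra.
  - intros eps Heps.
    destruct (archimed_cor1 (eps / (8 * PI))) as [N [HN HN0]].
    { apply Rdiv_lt_0_compat. lra. pose proof PI_RGT_0. lra. }
    exists N. intros n Hn. unfold R_dist. rewrite Rminus_0_r.
    pose proof (dW_tw (kn n) (cn n) (cn_bounds n)).
    rewrite Rabs_right by lra.
    assert (Rabs (kn n) = PI / (INR n + 1)).
    { unfold kn. pose proof (pos_INR n). pose proof PI_RGT_0. unfold Rdiv. rewrite Rabs_mult, Rabs_Ropp.
      rewrite Rabs_right by lra. rewrite Rabs_right. auto. apply Rle_ge; left; apply Rinv_0_lt_compat; lra. }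
    rewrite H0 in H.
    assert (0 < INR N) by (apply lt_0_INR; auto).
    assert (INR N <= INR n) by (apply le_INR; auto).
    pose proof PI_RGT_0.
    assert (PI / (INR n + 1) < eps / 8).
    { apply Rle_lt_trans with (PI / INR N).
      unfold Rdiv. apply Rmult_le_compat_l. lra. apply Rinv_le_contravar; lra.
      apply (Rmult_lt_compat_l PI) in HN; [|lra].
      replace (PI * (eps / (8 * PI))) with (eps / 8) in HN by (field; lra). exact HN. }
    lra.
Qed.
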